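(* Let $C = a_1, \dots, a_h, a_1$ and $D = b_1,\dots,b_g,b_1$ be two distinct cycles of an optimal (minimum-weight) cycle cover of the distance graph $G_S$, and let $e=\langle a_1,\dots,a_h\rangle$ and $f=\langle b_1,\dots,b_g\rangle$. Then $e$ and $f$ are inequivalent. Moreover, each of the pairs $(e,\bar f^R)$, $(\bar e^R, f)$ and $(\bar e^R,\bar f^R)$ is inequivalent.
   Context: Alphabet $\Sigma=\{\texttt a,\texttt t,\texttt g,\texttt c\}$ with complement $\bar{\texttt a}=\texttt t$, $\bar{\texttt t}=\texttt a$, $\bar{\texttt g}=\texttt c$, $\bar{\texttt c}=\texttt g$; the reverse complement of $s=b_1\cdots b_n$ is $\bar{s}^R=\bar{b_n}\cdots\bar{b_1}$. $S=\{s_1,\dots,s_m\}$ is a finite set of strings over $\Sigma$ such that no string of $S\cup\bar S^R$ is a substring of another, where $\bar S^R=\{\bar s^R: s\in S\}$. For strings $x,y$, $\mathrm{ov}(x,y)$ is the length of the longest $v$ with $x=uv$, $y=vw$ for nonempty $u,w$; $\mathrm{pref}(x,y)=u$; $\mathrm{dist}(x,y)=|x|-\mathrm{ov}(x,y)$; $\langle x_1,\dots,x_r\rangle=\mathrm{pref}(x_1,x_2)\cdots\mathrm{pref}(x_{r-1},x_r)\,x_r$. The distance graph $G_S$ is the complete directed graph (with loops) on vertex set $S\cup\bar S^R$ with edge weights $w(x,y)=\mathrm{dist}(x,y)$. A cycle $x_1,\dots,x_r,x_1$ (distinct vertices, $r\ge1$) has weight $\sum_{i=1}^r\mathrm{dist}(x_i,x_{i+1})$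 with $x_{r+1}=x_1$. A cycle cover of $G_S$ is a set of vertex-disjoint cycles such that for each $i$ exactly one of $s_i,\bar{s_i}^R$ lies on the cycles; it is optimal if it has minimum total weight. For a finite string $s$, $\mathrm{factor}(s)$ is the shortest string $x$ with $s=x^iy$ for some integer $i\ge1$ and some (possibly empty) prefix $y$ of $x$, and $\mathrm{period}(s)=|\mathrm{factor}(s)|$. Two strings $x,y$ are equivalent if $\mathrm{factor}(y)$ is a cyclic shift of $\mathrm{factor}(x)$ (i.e. $\mathrm{factor}(x)=pq$, $\mathrm{factor}(y)=qp$ for some strings $p,q$), and inequivalent otherwise. *)

(* Defs.v *)
From HB Require Import structures.
From mathcomp Require Import all_boot.
Set Implicit Arguments. Unset Strict Implicit. Unset Printing Implicit Defensive.

Inductive base := Ba | Bt | Bg | Bc.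

Definition base_eqb (x y : base) : bool :=
  match x, y with
  | Ba, Ba | Bt, Bt | Bg, Bg | Bc, Bc => true
  | _, _ => false
  end.

Lemma base_eqP : Equality.axiom base_eqb.
Proof. by case; case; constructor. Qed.

HB.instance Definition _ := hasDecEq.Build base base_eqP.

Definition word := seq base.

Definition comp (b : base) : base :=
  match b with Ba => Bt | Bt => Ba | Bg => Bc | Bc => Bg end.

Definition revcomp (s : word) : word := rev (map comp s).

Definition vertices (S : seq word) : seq word := S ++ map revcomp S.

(* ov(x,y): length of the longest v with x = u v, y = v w, u, w nonempty *)
Definition ov_ok (x y : word) (k : nat) : bool :=
  [&& k < size x, k < size y & drop (size x - k) x == take k y].

Definition ov (x y : word) : nat :=
  \max_(k < (size x).+1 | ov_ok x y k) k.

Definition pref (x y : word) : word := take (size x - ov x y) x.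

Definition dist (x y : word) : nat := size x - ov x y.

Fixpoint omerge (xs : seq word) : word :=
  match xs with
  | [::] => [::]
  | [:: x] => x
  | x :: ((y :: _) as t) => pref x y ++ omerge t
  end.

Definition cycle_weight (c : seq word) : nat :=
  match c with
  | [::] => 0
  | x :: t => \sum_(p <- zip c (rcons t x)) dist p.1 p.2
  end.

(* A cycle cover of G_S: a list of cycles (each a nonempty list of distinct
   vertices), pairwise vertex-disjoint, such that for every s in S exactly one
   of s, \bar s^R lies on the cycles. *)
Definition cycle_cover (S : seq word) (CC : seq (seq word)) : Prop :=
  [/\ all (fun c => c != [::]) CC,
      uniq (flatten CC),
      all (fun v => v \in vertices S) (flatten CC) &
      forall s, s \in S ->
        count (fun v => v \in [:: s; revcomp s]) (flatten CC) = 1].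

Definition cover_weight (CC : seq (seq word)) : nat :=
  \sum_(c <- CC) cycle_weight c.

Definition optimal_cycle_cover (S : seq word) (CC : seq (seq word)) : Prop :=
  cycle_cover S CC /\
  forall CC', cycle_cover S CC' -> cover_weight CC <= cover_weight CC'.

(* s = x^i y with i >= 1 and y a prefix of x, where x = take p s *)
Definition factor_len_ok (s : word) (p : nat) : bool :=
  [exists i : 'I_(size s).+2, [exists j : 'I_p.+1,
     (0 < i) && (s == flatten (nseq i (take p s)) ++ take j (take p s))]].

(* period(s): the least such length (p = |s| always works);
   factor(s) = the shortest such x (necessarily a prefix of s). *)
Definition period (s : word) : nat :=
  find (factor_len_ok s) (iota 0 (size s).+1).

Definition factor (s : word) : word := take (period s) s.

Definition equivalent (x y : word) : Prop :=
  exists p q : word, factor x = p ++ q /\ factor y = q ++ p.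

Definition substring_free (S : seq word) : Prop :=
  forall x y, x \in vertices S -> y \in vertices S -> x != y -> ~~ infix x y.

(* Main.v *)
Require Import Defs.
From mathcomp Require Import all_boot.
From mathcomp Require Import zify.
Set Implicit Arguments. Unset Strict Implicit. Unset Printing Implicit Defensive.

Ltac norm_size := repeat match goal with
 | |- context [@size (Equality.sort ?T) ?x] => change (@size (Equality.sort T) x) with (@size base x)
 | H : context [@size (Equality.sort ?T) ?x] |- _ => change (@size (Equality.sort T) x) with (@size base x) in H
 end.
Ltac nlia := norm_size; lia.

Lemma compK : involutive Defs.comp. Proof. by case. Qed.
Lemma revcompK : involutive revcomp.
Proof. by move=> s; rewrite /revcomp map_rev revK (mapK compK). Qed.
Lemma size_revcomp s : size (revcomp s) = size s.
Proof. by rewrite size_rev size_map. Qed.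
Lemma infix_revcomp x y : infix x y -> infix (revcomp x) (revcomp y).
Proof.
move/infixP=> [a [b ->]]; rewrite /revcomp !map_cat !rev_cat.
by apply/infixP; exists (rev (map Defs.comp b)), (rev (map Defs.comp a)); rewrite catA.
Qed.
Lemma nth_revcomp s k : k < size s ->
  nth Ba (revcomp s) k = Defs.comp (nth Ba s (size s - k.+1)).
Proof.
move=> ks; rewrite /revcomp nth_rev size_map // (nth_map Ba) //; lia.
Qed.

Lemma ov_max x y k : ov_ok x y k -> k <= ov x y.
Proof.
move=> h; have hk : k < (size x).+1 by case/and3P: h => h1 _ _; lia.
exact: (@leq_bigmax_cond _ (fun i : 'I_(size x).+1 => ov_ok x y i) (fun i => nat_of_ord i) (Ordinal hk)).
Qed.

Lemma ovP x y : ov x y = 0 \/ ov_ok x y (ov x y).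
Proof.
rewrite /ov; case: (pickP (fun k : 'I_(size x).+1 => ov_ok x y k)) => [k0 hk0|h0].
  have [i0 hi0 ->] := @eq_bigmax_cond _ (fun i : 'I_(size x).+1 => ov_ok x y i) (fun i => nat_of_ord i)
     ltac:(by apply/card_gt0P; exists k0).
  by right.
by left; rewrite big_pred0.
Qed.

Lemma ov_le x y : ov x y <= size x.
Proof. by case: (ovP x y) => [->|/and3P[h _ _]] //; lia. Qed.

Lemma drop_ov x y : drop (size x - ov x y) x = take (ov x y) y.
Proof.
case: (ovP x y) => [->|/and3P[_ _ /eqP //]].
by rewrite subn0 drop_size take0.
Qed.

Lemma size_pref x y : size (pref x y) = dist x y.
Proof. by rewrite /pref size_takel // leq_subr. Qed.

Lemma dist_pos x y : 0 < size x -> 0 < dist x y.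
Proof.
rewrite /dist; case: (ovP x y) => [->|/and3P[h _ _]]; lia.
Qed.

Lemma dist_le x y : dist x y <= size x.
Proof. rewrite /dist; lia. Qed.

Lemma pref_cat x y : pref x y ++ take (ov x y) y = x.
Proof. by rewrite /pref -drop_ov cat_take_drop. Qed.

Lemma omerge2 x y s : omerge [:: x, y & s] = pref x y ++ omerge (y :: s).
Proof. by []. Qed.

Lemma omerge_pre x s : exists r, omerge (x :: s) = x ++ r.
Proof.
elim: s x => [|y s IH] x; first by exists [::]; rewrite cats0.
rewrite omerge2; have [r ->] := IH y.
exists (drop (ov x y) y ++ r).
set d := drop _ y.
rewrite -[X in _ = X ++ _](pref_cat x y) -catA; congr (_ ++ _).
by rewrite catA /d cat_take_drop.
Qed.
Lemma omerge_infix x s z : z \in x :: s -> infix z (omerge (x :: s)).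
Proof.
elim: s x => [|y s IH] x.
  by rewrite mem_seq1 => /eqP ->; exact: infix_refl.
rewrite in_cons => /orP[/eqP ->|hz].
  by have [r ->] := omerge_pre x (y :: s); exact: prefix_infix.
by rewrite omerge2; apply: infix_catl; exact: IH.
Qed.

Fixpoint Tp (x : word) (s : seq word) (z : word) : word :=
  match s with [::] => pref x z | y :: s' => pref x y ++ Tp y s' z end.

Lemma Tp_pre x s z : exists r, omerge (x :: s) ++ r = Tp x s z ++ z.
Proof.
elim: s x => [|y s IH] x.
  exists (drop (ov x z) z).
  by rewrite -[X in X ++ _ = _](pref_cat x z) -catA cat_take_drop.
have [r hr] := IH y; exists r.
by rewrite omerge2 -catA hr catA.
Qed.

Lemma size_Tp x s z :
  size (Tp x s z) = \sum_(p <- zip (x :: s) (rcons s z)) dist p.1 p.2.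
Proof.
elim: s x => [|y s IH] x /=; first by rewrite big_cons big_nil addn0 size_pref.
by rewrite size_cat IH big_cons size_pref.
Qed.

Definition per (w : nat) (s : word) :=
  forall k, k + w < size s -> nth Ba s k = nth Ba s (k + w).

Lemma per_omerge x s : per (cycle_weight (x :: s)) (omerge (x :: s)).
Proof.
have [r hr] := Tp_pre x s x.
have [r2 hr2] := omerge_pre x s.
set e := omerge (x :: s) in hr hr2 *.
have H : e ++ (r ++ r2) = Tp x s x ++ e by rewrite catA hr hr2 catA.
rewrite /cycle_weight -size_Tp => k hk.
have := congr1 (fun l => nth Ba l (k + size (Tp x s x))) H.
rewrite nth_cat hk nth_cat ltnNge leq_addl /= addnK => ->.
by [].
Qed.

Lemma per_revcomp w s : per w s -> per w (revcomp s).
Proof.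
move=> h k; rewrite size_revcomp => hk.
rewrite !nth_revcomp; try lia.
congr Defs.comp.
have := h (size s - (k + w).+1) ltac:(lia).
have -> : size s - (k + w).+1 + w = size s - k.+1 by lia.
by move=> ->.
Qed.

Lemma cycle_weight_pos x s : 0 < size x -> 0 < cycle_weight (x :: s).
Proof.
move=> hx; rewrite /cycle_weight; case: s => [|y s] /=; rewrite big_cons /=.
  by have := dist_pos x hx; lia.
by have := dist_pos y hx; lia.
Qed.
Lemma size_flat_nseq i (u : word) : size (flatten (nseq i u)) = i * size u.
Proof. by elim: i => //= i IH; rewrite size_cat IH mulSn. Qed.

Lemma flat_nseq0 i : flatten (nseq i ([::] : word)) = [::].
Proof. by elim: i. Qed.

Lemma nth_flat (u : word) i j k : 0 < size u -> j <= size u -> k < i * size u + j ->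
  nth Ba (flatten (nseq i u) ++ take j u) k = nth Ba u (k %% size u).
Proof.
move=> hu hj; elim: i k => [|i IH] k /= hk.
  rewrite nth_take; last lia.
  by rewrite modn_small //; lia.
rewrite -catA nth_cat; case: ifP => hk1; first by rewrite modn_small.
rewrite IH; last by rewrite mulSn in hk; lia.
have H : size u <= k by lia.
by rewrite -{2}(subnK H) modnDr.
Qed.

Lemma flo_size s : factor_len_ok s (size s).
Proof.
have h1 : 1 < (size s).+2 by [].
apply/existsP; exists (Ordinal h1); apply/existsP; exists (Ordinal (ltn0Sn (size s))).
by rewrite /= take_size cats0 take0 cats0 eqxx.
Qed.

Lemma period_has s : has (factor_len_ok s) (iota 0 (size s).+1).
Proof. by apply/hasP; exists (size s); [rewrite mem_iota; lia | exact: flo_size]. Qed.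

Lemma period_le s : period s <= size s.
Proof. have := period_has s; rewrite has_find size_iota /period; lia. Qed.

Lemma period_ok s : factor_len_ok s (period s).
Proof.
have := nth_find 0 (period_has s); rewrite nth_iota //.
by have := period_le s; rewrite /period; lia.
Qed.

Lemma period_min s w : w <= size s -> factor_len_ok s w -> period s <= w.
Proof.
move=> hw hok; rewrite leqNgt; apply/negP => /(before_find 0).
by rewrite nth_iota ?add0n ?hok //; lia.
Qed.

Lemma period_pos s : 0 < size s -> 0 < period s.
Proof.
move=> hs; case h: (period s) => //.
have := period_ok s; rewrite h => /existsP[i /existsP[j /andP[_ /eqP E]]].
by move: hs; rewrite E take0 flat_nseq0.
Qed.

Lemma size_factor s : size (factor s) = period s.
Proof. by rewrite /factor size_takel // period_le. Qed.

Lemma period_nth s k : k < size s -> nth Ba s k = nth Ba (factor s) (k %% period s).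
Proof.
move=> hk; have hp := period_pos (leq_ltn_trans (leq0n k) hk).
have := period_ok s => /existsP[i /existsP[j /andP[_ /eqP hs]]].
rewrite -size_factor; rewrite -/(factor s) in hs.
have su : size (factor s) = period s by exact: size_factor.
have hj : j <= size (factor s) by rewrite su; have := ltn_ord j; lia.
have E : nth Ba s k = nth Ba (flatten (nseq i (factor s)) ++ take j (factor s)) k by rewrite -hs.
have hk2 : k < i * size (factor s) + j.
  have : size s = i * period s + j by rewrite {1}hs size_cat size_flat_nseq size_takel // su.
  rewrite su; lia.
by rewrite E nth_flat // su.
Qed.

Lemma per_period w s : 0 < w -> per w s -> period s <= w.
Proof.
move=> w0 h; case: (leqP (size s) w) => hw; first exact: leq_trans (period_le s) hw.
apply: period_min; first lia.
have pm : forall n k, k <= n -> k < size s -> nth Ba s k = nth Ba s (k %% w).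
  elim=> [|n IH] k hk hks; first by move: hk; rewrite leqn0 => /eqP ->; rewrite mod0n.
  case: (ltnP k w) => hkw; first by rewrite modn_small.
  have := h (k - w) ltac:(lia); rewrite subnK // => <-.
  by rewrite IH; [rewrite -{2}(subnK hkw) modnDr | lia | lia].
have hi : size s %/ w < (size s).+2 by have := leq_div (size s) w; lia.
have hj : size s %% w < w.+1 by have := ltn_pmod (size s) w0; lia.
apply/existsP; exists (Ordinal hi); apply/existsP; exists (Ordinal hj).
apply/andP; split; first by rewrite /= divn_gt0 //; lia.
have su : size (take w s) = w by rewrite size_takel //; lia.
apply/eqP/(@eq_from_nth _ Ba) => /=.
  by rewrite size_cat size_flat_nseq su size_takel ?su -?divn_eq //.
move=> k hk; rewrite nth_flat ?su //; last by rewrite -divn_eq.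
rewrite nth_take ?ltn_pmod //.
by rewrite (pm k k).
Qed.
Section Merge.
Variable u : word.
Local Notation p := (size u).
Definition U n := nth Ba u (n %% p).
Definition good (x : word) (o : nat) :=
  all (fun k => nth Ba x k == U (o + k)) (iota 0 (size x)).

Lemma goodP x o : reflect (forall k, k < size x -> nth Ba x k = U (o + k)) (good x o).
Proof.
apply: (iffP allP) => h k.
  by move=> hk; apply/eqP/h; rewrite mem_iota; nlia.
by rewrite mem_iota => hk; apply/eqP/h; nlia.
Qed.

Lemma good_mod x o : good x o -> good x (o %% p).
Proof. by move/goodP => h; apply/goodP => k hk; rewrite h // /U modnDml. Qed.

Lemma good_addp x o : good x o -> good x (o + p).
Proof. by move/goodP => h; apply/goodP => k hk; rewrite h // /U addnAC modnDr. Qed.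

Definition off x := find (good x) (iota 0 p).

Lemma off_lt x o : 0 < p -> good x o -> off x < p /\ good x (off x).
Proof.
move=> p0 g.
have hh : has (good x) (iota 0 p).
  by apply/hasP; exists (o %% p); [rewrite mem_iota ltn_pmod | exact: good_mod].
have hlt : off x < p by rewrite /off -[X in _ < X](size_iota 0 p) -has_find.
split=> //; have := nth_find 0 hh; rewrite nth_iota //.
Qed.

Variable V : seq word.
Hypothesis sf : forall x y, x \in V -> y \in V -> x != y -> ~~ infix x y.

Lemma good_same x y o : x \in V -> y \in V -> good x o -> good y o -> x = y.
Proof.
wlog: x y / size x <= size y.
  move=> W hx hy gx gy; case: (leqP (size x) (size y)) => h; first exact: W.
  by apply/esym/W => //; nlia.
move=> hs hx hy /goodP gx /goodP gy; apply/eqP/negPn/negP => nxy.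
suff : infix x y by rewrite (negbTE (sf hx hy nxy)).
apply: prefixW; rewrite prefixE.
apply/eqP/(@eq_from_nth _ Ba); first by rewrite size_takel.
move=> k; rewrite size_takel // => hk; rewrite nth_take // gx // gy //; first exact: leq_trans hk hs.
Qed.

Lemma infix_shift x y o d : good x o -> good y (o + d) -> size y + d <= size x ->
  infix y x.
Proof.
move=> /goodP gx /goodP gy hs; rewrite -(cat_take_drop d x); apply: infix_catl.
apply: prefixW; rewrite prefixE; apply/eqP/(@eq_from_nth _ Ba).
  by rewrite size_takel // size_drop; nlia.
move=> k; rewrite size_takel ?size_drop; last nlia.
move=> hk; rewrite nth_take // nth_drop gx; last nlia.
by rewrite gy // addnA.
Qed.

Lemma dist_shift x y o d : good x o -> good y (o + d) -> 0 < d ->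
  (x = y \/ ~~ infix y x) -> dist x y <= d.
Proof.
move=> gx gy d0 H.
case: (leqP (size x) d) => hd; first by have := dist_le x y; nlia.
have hky : size x - d < size y.
  rewrite ltnNge; apply/negP => hy.
  have hi := infix_shift gx gy ltac:(nlia).
  case: H => [exy|ni]; [subst; lia | by rewrite hi in ni].
have : ov_ok x y (size x - d).
  apply/and3P; split => //; first nlia.
  apply/eqP/(@eq_from_nth _ Ba).
    by rewrite size_drop size_takel; nlia.
  move=> k; rewrite size_drop => hk.
  move/goodP: gx => gx; move/goodP: gy => gy.
  rewrite nth_drop nth_take; last nlia.
  rewrite gx; last nlia. rewrite gy; last nlia.
  congr U; nlia.
by move/ov_max; rewrite /dist; nlia.
Qed.

Lemma merge_bound (L : seq word) : 0 < p -> uniq L -> L != [::] ->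
  {subset L <= V} -> (forall x, x \in L -> exists o, good x o) ->
  exists c, perm_eq c L /\ cycle_weight c <= p.
Proof.
move=> p0 uL L0 LV Lg.
pose leo := fun x y => off x <= off y.
pose c := sort leo L.
have pc : perm_eq c L by rewrite /c perm_sort.
exists c; split => //.
have cL := perm_mem pc.
have uc : uniq c by rewrite (perm_uniq pc).
have sc : sorted leo c by apply: sort_sorted => x y; exact: leq_total.
have Hin : forall x, x \in c -> off x < p /\ good x (off x).
  by move=> x; rewrite cL => /Lg [o g]; exact: off_lt g.
have HV : forall x, x \in c -> x \in V by move=> x; rewrite cL; exact: LV.
have Hinj : forall x y, x \in c -> y \in c -> off x = off y -> x = y.
  move=> x y hx hy e; apply: (good_same (HV _ hx) (HV _ hy) (Hin _ hx).2).
  by rewrite e; exact: (Hin _ hy).2.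
have Hlast : forall x t, path leo x t -> off x <= off (last x t).
  move=> x t; elim: t x => [|y t IH] x //= /andP[h1 h2].
  by apply: leq_trans h1 (IH _ h2).
have Hpath : forall x t z, {subset x :: t <= c} -> path leo x t -> uniq (x :: t) ->
    \sum_(pr <- zip (x :: t) (rcons t z)) dist pr.1 pr.2 <=
    off (last x t) - off x + dist (last x t) z.
  move=> x t z; elim: t x => [|y t IH] x sub pa un.
    by rewrite /= big_cons big_nil /=; nlia.
  rewrite /= big_cons /=.
  move: pa => /= /andP[lxy pa].
  have sub' : {subset y :: t <= c} by move=> w hw; apply: sub; rewrite in_cons hw orbT.
  have un' : uniq (y :: t) by case/andP: un.
  have hx : x \in c by apply: sub; rewrite mem_head.
  have hy : y \in c by apply: sub'; rewrite mem_head.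
  have nxy : x != y.
    by apply/eqP => exy; move: un; rewrite exy /= mem_head.
  have nof : off x != off y by apply/eqP => e; move/eqP: nxy; apply; exact: Hinj.
  have dxy : dist x y <= off y - off x.
    apply: (dist_shift (Hin _ hx).2).
    - by rewrite subnKC //; exact: (Hin _ hy).2.
    - by rewrite /leo in lxy; nlia.
    - by right; apply: sf; [exact: HV|exact: HV|rewrite eq_sym].
  apply: leq_trans (leq_add dxy (IH y sub' pa un')) _.
  have := Hlast y t pa; rewrite /leo in lxy.
  set a := off (last y t); set b := dist (last y t) z; nlia.
case cE : c (uc) (sc) => [|x0 t] uc' sc'.
  by move: L0; rewrite -size_eq0 -(perm_size pc) cE.
have sub : {subset x0 :: t <= c} by rewrite cE.
rewrite /cycle_weight.
have := Hpath x0 t x0 sub sc' uc'.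
have hx0 : x0 \in c by rewrite cE mem_head.
set l := last x0 t.
have hl0 := Hlast x0 t sc'.
case tE : t => [|y t'] H; apply: (leq_trans H).
  rewrite /l tE /=.
  have : dist x0 x0 <= p.
    apply: (dist_shift (Hin _ hx0).2) => //; last by left.
    exact: good_addp (Hin _ hx0).2.
  set b := dist x0 x0; nlia.
have hlt : l \in t by rewrite /l tE /=; exact: mem_last.
have hl : l \in c by rewrite cE in_cons hlt orbT.
have nl : l != x0 by apply/eqP => e; move: uc'; rewrite /= -e hlt.
have nof : off l != off x0 by apply/eqP => e; move/eqP: nl; apply; exact: Hinj.
have : dist l x0 <= p + off x0 - off l.
  apply: (dist_shift (Hin _ hl).2).
  - have -> : off l + (p + off x0 - off l) = off x0 + p by have := (Hin _ hl).1; nlia.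
    exact: good_addp (Hin _ hx0).2.
  - by have := (Hin _ hl).1; nlia.
  - by right; apply: sf; [exact: HV|exact: HV|rewrite eq_sym].
have := (Hin _ hl).1; move: hl0; rewrite -/l.
set a := off l; set b := dist l x0; nlia.
Qed.

End Merge.
Definition gb (b : bool) (v : word) := if b then revcomp v else v.

Lemma mem_pair_gb b s v : (gb b v \in [:: s; revcomp s]) = (v \in [:: s; revcomp s]).
Proof.
case: b => //=; rewrite !in_cons !in_nil !orbF.
by rewrite (inj_eq (can_inj revcompK)) (can2_eq revcompK revcompK) orbC.
Qed.

Lemma gb_vert S b v : v \in vertices S -> gb b v \in vertices S.
Proof.
case: b => //=; rewrite /vertices !mem_cat => /orP[h|/mapP[s hs ->]].
  by rewrite map_f ?orbT.
by rewrite revcompK hs.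
Qed.

Lemma vert_pair S v : v \in vertices S -> exists2 s, s \in S & v \in [:: s; revcomp s].
Proof.
rewrite /vertices mem_cat => /orP[h|/mapP[s hs ->]].
  by exists v => //; rewrite mem_head.
by exists s => //; rewrite !in_cons eqxx orbT.
Qed.

Lemma uniq_count (M : seq word) :
  (forall z, z \in M -> exists a : pred word, a z /\ count a M <= 1) -> uniq M.
Proof.
elim: M => [|z M IH] //= H; apply/andP; split.
  have [a [az ca]] := H z (mem_head _ _).
  apply/negP => zM; move: ca; rewrite /= az.
  have : 0 < count a M by rewrite -has_count; apply/hasP; exists z.
  lia.
apply: IH => w wM; have [a [aw ca]] := H w (@mem_behead _ (z :: M) _ wM).
by exists a; split => //; move: ca => /=; lia.
Qed.

Lemma count_gb (a : pred word) b X :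
  (forall v, a (gb b v) = a v) -> count a (map (gb b) X) = count a X.
Proof. by move=> h; rewrite count_map; apply: eq_count => v /=; rewrite h. Qed.

Lemma cover_contra S CC i j bc bd (c : seq word) :
  optimal_cycle_cover S CC -> i < size CC -> j < size CC -> i != j ->
  perm_eq c (map (gb bc) (nth [::] CC i) ++ map (gb bd) (nth [::] CC j)) ->
  cycle_weight c < cycle_weight (nth [::] CC i) + cycle_weight (nth [::] CC j) ->
  False.
Proof.
move=> [[cne cu cv ccount] opt] hi hj nij pc hw.
set C := nth [::] CC i in pc hw; set D := nth [::] CC j in pc hw.
set ks := [seq k <- iota 0 (size CC) | (k != i) && (k != j)].
set rest := map (nth [::] CC) ks.
have hperm : perm_eq CC (C :: D :: rest).
  have : perm_eq (iota 0 (size CC)) (i :: j :: ks).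
    apply: uniq_perm; first exact: iota_uniq.
      have ui : i \notin ks by rewrite /ks mem_filter eqxx.
      have uj : j \notin ks by rewrite /ks mem_filter eqxx andbF.
      by rewrite /= in_cons negb_or nij ui uj /ks filter_uniq // iota_uniq.
    move=> k; rewrite !in_cons /ks mem_filter mem_iota.
    by apply/idP/idP; lia.
  move/(perm_map (nth [::] CC)).
  have -> : map (nth [::] CC) (iota 0 (size CC)) = CC by rewrite -[RHS](mkseq_nth [::]).
  by [].
have hmemCC : forall x, x \in rest -> x \in CC.
  by move=> x hx; rewrite (perm_mem hperm) !in_cons hx !orbT.
have hflat := perm_flatten hperm.
rewrite /= in hflat.
set R := flatten rest in hflat.
set M := map (gb bc) C ++ map (gb bd) D ++ R.
have pM : perm_eq (c ++ R) M by rewrite /M catA perm_cat2r.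
have vN : forall v, v \in C ++ D ++ R -> v \in vertices S.
  by move=> v hv; apply: (allP cv); rewrite (perm_mem hflat).
have vM : forall v, v \in M -> v \in vertices S.
  move=> v hv; rewrite /M !mem_cat in hv; move: hv => /or3P[/mapP[w hw0 ->]|/mapP[w hw0 ->]|hv].
  - by apply: gb_vert; apply: vN; rewrite mem_cat hw0.
  - by apply: gb_vert; apply: vN; rewrite !mem_cat hw0 orbT.
  - by apply: vN; rewrite !mem_cat hv !orbT.
have cM : forall s, s \in S -> count (fun v => v \in [:: s; revcomp s]) M = 1.
  move=> s hs; rewrite -(ccount s hs) ((permP hflat) _) /M !count_cat.
  by rewrite !count_gb // => v; rewrite mem_pair_gb.
have uM : uniq M.
  apply: uniq_count => z /vM /vert_pair [s hs hz].
  by exists (fun v => v \in [:: s; revcomp s]); rewrite cM.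
have Ccov : cycle_cover S (c :: rest).
  split.
  - rewrite /= andbC; apply/andP; split.
      by apply/allP => x /hmemCC hx; exact: (allP cne).
    apply/eqP => c0; move: pc; rewrite c0 => /perm_size /=.
    rewrite size_cat size_map; have : C != [::] by apply: (allP cne); rewrite mem_nth.
    by case: (C).
  - by rewrite /= (perm_uniq pM).
  - by apply/allP => v; rewrite /= (perm_mem pM); exact: vM.
  - by move=> s hs; rewrite /= ((permP pM) _); exact: cM.
have := opt _ Ccov.
rewrite /cover_weight (perm_big _ hperm) !big_cons.
move: hw; set a := cycle_weight C; set b := cycle_weight D; set d := cycle_weight c.
set r := \sum_(_ <- rest) _.
move=> h1 h2; have h3 : a + (b + r) <= d + r := h2; lia.
Qed.
Lemma split_cover (CC : seq (seq word)) i j : i < size CC -> j < size CC -> i != j ->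
  exists rest, perm_eq CC (nth [::] CC i :: nth [::] CC j :: rest).
Proof.
move=> hi hj nij.
set ks := [seq k <- iota 0 (size CC) | (k != i) && (k != j)].
exists (map (nth [::] CC) ks).
have : perm_eq (iota 0 (size CC)) (i :: j :: ks).
  apply: uniq_perm; first exact: iota_uniq.
    have ui : i \notin ks by rewrite /ks mem_filter eqxx.
    have uj : j \notin ks by rewrite /ks mem_filter eqxx andbF.
    by rewrite /= in_cons negb_or nij ui uj /ks filter_uniq // iota_uniq.
  move=> k; rewrite !in_cons /ks mem_filter mem_iota.
  by apply/idP/idP; lia.
move/(perm_map (nth [::] CC)).
have -> : map (nth [::] CC) (iota 0 (size CC)) = CC by rewrite -[RHS](mkseq_nth [::]).
by [].
Qed.

Lemma uniqL S CC i j bc bd : cycle_cover S CC -> i < size CC -> j < size CC -> i != j ->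
  uniq (map (gb bc) (nth [::] CC i) ++ map (gb bd) (nth [::] CC j)).
Proof.
move=> [cne cu cv ccount] hi hj nij.
have [rest hperm] := split_cover hi hj nij.
set C := nth [::] CC i in hperm *; set D := nth [::] CC j in hperm *.
have hflat := perm_flatten hperm.
rewrite /= in hflat.
set R := flatten rest in hflat.
set M := map (gb bc) C ++ map (gb bd) D ++ R.
have vN : forall v, v \in C ++ D ++ R -> v \in vertices S.
  by move=> v hv; apply: (allP cv); rewrite (perm_mem hflat).
have vM : forall v, v \in M -> v \in vertices S.
  move=> v hv; rewrite /M !mem_cat in hv; move: hv => /or3P[/mapP[w hw0 ->]|/mapP[w hw0 ->]|hv].
  - by apply: gb_vert; apply: vN; rewrite mem_cat hw0.
  - by apply: gb_vert; apply: vN; rewrite !mem_cat hw0 orbT.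
  - by apply: vN; rewrite !mem_cat hv !orbT.
have cM : forall s, s \in S -> count (fun v => v \in [:: s; revcomp s]) M = 1.
  move=> s hs; rewrite -(ccount s hs) ((permP hflat) _) /M !count_cat.
  by rewrite !count_gb // => v; rewrite mem_pair_gb.
have uM : uniq M.
  apply: uniq_count => z /vM /vert_pair [s hs hz].
  by exists (fun v => v \in [:: s; revcomp s]); rewrite cM.
by move: uM; rewrite /M catA cat_uniq => /andP[].
Qed.

Lemma rot_nth (P Q : word) n : 0 < size (P ++ Q) ->
  nth Ba (Q ++ P) (n %% size (P ++ Q)) = nth Ba (P ++ Q) ((n + size P) %% size (P ++ Q)).
Proof.
move=> p0; set p := size (P ++ Q).
have hp : p = size P + size Q by rewrite /p size_cat.
have hm : n %% p < p by rewrite ltn_pmod.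
rewrite -modnDml; set m := n %% p in hm *.
rewrite nth_cat; case: ifP => hq.
  rewrite modn_small; last nlia.
  by rewrite nth_cat ltnNge leq_addl /= addnK.
have -> : m + size P = (m - size Q) + p by nlia.
rewrite modnDr modn_small; last nlia.
by rewrite nth_cat; case: ifP => //; nlia.
Qed.

Lemma main_case S CC i j bc bd : substring_free S -> optimal_cycle_cover S CC ->
  i < size CC -> j < size CC -> i != j ->
  ~ equivalent (gb bc (omerge (nth [::] CC i))) (gb bd (omerge (nth [::] CC j))).
Proof.
move=> sf opt hi hj nij [P [Q [hP hQ]]].
have opt' := opt; case: opt' => [cov _]; have cov' := cov.
case: cov' => [cne cu cv ccount].
have uL := uniqL bc bd cov hi hj nij.
have [rest hperm] := split_cover hi hj nij.
set C := nth [::] CC i in hperm uL hP *; set D := nth [::] CC j in hperm uL hQ *.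
have hflat := perm_flatten hperm; rewrite /= in hflat.
have vCD : forall v, v \in C ++ D -> v \in vertices S.
  by move=> v hv; apply: (allP cv); rewrite (perm_mem hflat) catA mem_cat hv.
have uCD : uniq (C ++ D).
  by move: cu; rewrite (perm_uniq hflat) catA cat_uniq => /andP[].
have Cne : C != [::] by apply: (allP cne); rewrite mem_nth.
have Dne : D != [::] by apply: (allP cne); rewrite mem_nth.
have hne : forall v, v \in C ++ D -> 0 < size v.
  move=> v hv; rewrite lt0n size_eq0; apply/negP => /eqP v0.
  case CE : C Cne uCD => [|x0 s] // _; case DE : D Dne => [|y0 t] // _.
  rewrite cat_uniq => /and3P[_ hxy _].
  have nxy : x0 != y0.
    by apply/eqP => e; move: hxy; rewrite /= e mem_head.
  have hx : x0 \in vertices S by apply: vCD; rewrite CE mem_head.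
  have hy : y0 \in vertices S by apply: vCD; rewrite DE mem_cat mem_head orbT.
  have hvv : v \in vertices S by exact: vCD.
  have [w [hw nw]] : exists w, w \in vertices S /\ v != w.
    case: (eqVneq v x0) => [vx|vx]; last by exists x0.
    by exists y0; split => //; rewrite vx.
  by have := sf _ _ hvv hw nw; rewrite v0 infix0s.
case CE : C Cne hne vCD uL hP => [|x0 s] // _ hne vCD uL hP.
case DE : D Dne hne vCD uL hQ => [|y0 t] // _ hne vCD uL hQ.
have x0p : 0 < size x0 by apply: hne; rewrite mem_head.
have y0p : 0 < size y0 by apply: hne; rewrite mem_cat mem_head orbT.
set e := omerge (x0 :: s) in hP *; set f := omerge (y0 :: t) in hQ *.
set ec := gb bc e in hP; set fd := gb bd f in hQ.
have wC := cycle_weight_pos s x0p; have wD := cycle_weight_pos t y0p.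
have pere : per (cycle_weight (x0 :: s)) ec.
  by rewrite /ec /gb; case: (bc) => /=; [apply: per_revcomp|]; exact: per_omerge.
have hpe := per_period wC pere.
have infC : forall x, x \in x0 :: s -> infix (gb bc x) ec.
  move=> x hx; have := omerge_infix hx; rewrite /ec /gb; case: (bc) => //.
  exact: infix_revcomp.
have infD : forall y, y \in y0 :: t -> infix (gb bd y) fd.
  move=> y hy; have := omerge_infix hy; rewrite /fd /gb; case: (bd) => //.
  exact: infix_revcomp.
have sizeg : forall b v, size (gb b v) = size v by case=> v //=; rewrite size_revcomp.
have ecp : 0 < size ec.
  have /infixP [a [b' E]] := infC x0 (mem_head _ _).
  by rewrite E !size_cat sizeg; nlia.
have fdp : 0 < size fd.
  have /infixP [a [b' E]] := infD y0 (mem_head _ _).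
  by rewrite E !size_cat sizeg; nlia.
set u := factor ec.
have su : size u = period ec by rewrite size_factor.
have p0 : 0 < size u by rewrite su period_pos.
have pfd : period fd = size u by rewrite -size_factor hQ /u hP !size_cat addnC.
set L := map (gb bc) (x0 :: s) ++ map (gb bd) (y0 :: t).
have Lg : forall z, z \in L -> exists o, good u z o.
  move=> z; rewrite mem_cat => /orP[/mapP[x hx ->]|/mapP[y hy ->]].
    have /infixP [a [b' E]] := infC x hx.
    exists (size a); apply/goodP => k hk.
    have hk' : size a + k < size ec by rewrite E !size_cat; nlia.
    rewrite /U su -period_nth // E nth_cat ltnNge leq_addr /= addKn.
    by rewrite nth_cat hk.
  have /infixP [a [b' E]] := infD y hy.
  exists (size a + size P); apply/goodP => k hk.
  have hk' : size a + k < size fd by rewrite E !size_cat; nlia.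
  have := period_nth hk'; rewrite pfd hQ.
  have uPQ : u = P ++ Q := hP.
  rewrite uPQ rot_nth -?uPQ; last exact: p0.
  rewrite E nth_cat ltnNge leq_addr /= addKn nth_cat hk => ->.
  by rewrite /U; congr nth; congr modn; nlia.
have LV : {subset L <= vertices S}.
  move=> z; rewrite mem_cat => /orP[/mapP[x hx ->]|/mapP[y hy ->]]; apply: gb_vert; apply: vCD.
    by rewrite mem_cat hx.
  by rewrite mem_cat hy orbT.
have [c [pc wc]] := merge_bound sf p0 uL isT LV Lg.
apply: (cover_contra opt hi hj nij (bc := bc) (bd := bd) (c := c)).
  by rewrite -/C -/D CE DE.
rewrite -/C -/D CE DE; apply: leq_ltn_trans wc _; rewrite su; apply: leq_ltn_trans hpe _.
by rewrite -[X in X < _]addn0 ltn_add2l.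
Qed.

Theorem lemma11 (S : seq word) (CC : seq (seq word)) (i j : nat) :
  uniq S ->
  substring_free S ->
  optimal_cycle_cover S CC ->
  i < size CC -> j < size CC -> i != j ->
  let e := omerge (seq.nth [::] CC i) in
  let f := omerge (seq.nth [::] CC j) in
  [/\ ~ equivalent e f,
      ~ equivalent e (revcomp f),
      ~ equivalent (revcomp e) f &
      ~ equivalent (revcomp e) (revcomp f)].
Proof.
move=> _ sf opt hi hj nij e f; split.
- exact (main_case (bc:=false) (bd:=false) sf opt hi hj nij).
- exact (main_case (bc:=false) (bd:=true) sf opt hi hj nij).
- exact (main_case (bc:=true) (bd:=false) sf opt hi hj nij).
- exact (main_case (bc:=true) (bd:=true) sf opt hi hj nij).
Qed.
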